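(* Let $p$ be a prime and let $L\in\mathbb{F}_p((X^{-1}))$ be irrational with continued fraction expansion $L=[A_0;A_1,A_2,\ldots]$ such that $K(L):=\sup_{d\ge1}\deg(A_d)<\infty$. Let $B\in\mathbb{F}_p[X]$ be nonzero with $\deg B=e$. Then the digital Kronecker sequence associated with $BL$ is a $(t,1)$-sequence in base $p$ with $t=K(L)+e-1$.
   Context: Elements of $\mathbb{F}_p$ are identified with $\{0,\ldots,p-1\}$. For $n=n_0+n_1p+\cdots$ in base $p$, $n(X)=n_0+n_1X+\cdots$. For $M=\sum_{i=w}^\infty a_iX^{-i}$, $\{M\}=\sum_{i\ge\max(1,w)}a_iX^{-i}$. The digital Kronecker sequence associated with $M$: writing $\{n(X)M\}=\sum_{i\ge1}c_iX^{-i}$, $x_n=\sum_{i\ge1}c_ip^{-i}$. Every irrational $L$ has a unique infinite continued fraction expansion $[A_0;A_1,\ldots]$ with $A_i\in\mathbb{F}_p[X]$, $\deg A_i\ge1$ for $i\ge1$. A $(t,m,1)$-net in base $p$ is a set of $p^m$ points in $[0,1)$ such that every interval $[a/p^{m-t},(a+1)/p^{m-t})$, $0\le a<p^{m-t}$, contains exactly $p^t$ points; a sequence $(x_n)_{n\ge0}$ in $[0,1)$ is a $(t,1)$-sequence in base $p$ if for all integers $m>t$ and $k\ge0$ the points $x_{kp^m},\ldots,x_{(k+1)p^m-1}$ form a $(t,m,1)$-net in base $p$. *)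

(* Defs.v *)
From Stdlib Require Import Reals ZArith.
From HB Require Import structures.
From mathcomp Require Import all_boot all_order all_algebra.
Set Implicit Arguments. Unset Strict Implicit. Unset Printing Implicit Defensive.
Import GRing.Theory.

(* A series
     M = sum_{i >= lw} a_i X^{-i}
   is represented by its lower index bound lw : Z and the coefficient
   sequence lc n = a_{lw+n}.  Representations are not unique; equality of
   series is extensional equality of [lcoef] (see [leqL]). *)
Record laurent (p : nat) := Laurent { lw : Z; lc : nat -> 'F_p }.

Section Laurent.
Variable p : nat.
Local Notation F := 'F_p.
Local Notation LS := (laurent p).

Definition lcoef (M : LS) (i : Z) : F :=
  if Z.leb (lw M) i then lc M (Z.to_nat (Z.sub i (lw M))) else 0%R.

Definition leqL (M N : LS) : Prop := forall i, lcoef M i = lcoef N i.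

(* series with lower bound w and coefficient function f (coefficients of
   X^{-i} for i < w are discarded, i.e. taken to be 0) *)
Definition laurent_of (w : Z) (f : Z -> F) : LS :=
  Laurent w (fun n => f (Z.add w (Z.of_nat n))).

Definition lone : LS := Laurent 0 (fun n => if n == 0%N then 1%R else 0%R).

Definition laddL (M N : LS) : LS :=
  laurent_of (Z.min (lw M) (lw N)) (fun i => (lcoef M i + lcoef N i)%R).

Definition lsubL (M N : LS) : LS :=
  laurent_of (Z.min (lw M) (lw N)) (fun i => (lcoef M i - lcoef N i)%R).

Definition lmulL (M N : LS) : LS :=
  Laurent (Z.add (lw M) (lw N))
    (fun n => (\sum_(k < n.+1) lc M k * lc N (n - k)%N)%R).

Definition polyL (q : {poly F}) : LS :=
  laurent_of (Z.opp (Z.of_nat (size q)))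
    (fun i => if Z.leb i 0 then (q`_(Z.to_nat (Z.opp i)))%R else 0%R).

Definition polypart (M : LS) : {poly F} :=
  \poly_(j < (Z.to_nat (Z.opp (lw M))).+1) lcoef M (Z.opp (Z.of_nat j)).

Definition fracpart (M : LS) : LS := laurent_of (Z.max 1 (lw M)) (lcoef M).

Definition irrational (L : LS) : Prop :=
  forall P Q : {poly F}, Q != 0%R -> ~ leqL (lmulL (polyL Q) L) (polyL P).

(* A is the continued fraction expansion [A_0; A_1, ...] of L:
   complete quotients L_0 = L, A_n = polynomial part of L_n,
   L_n = A_n + 1/L_{n+1}, i.e. (L_n - A_n) * L_{n+1} = 1, and deg A_n >= 1 for n >= 1. *)
Definition is_cf_expansion (L : LS) (A : nat -> {poly F}) : Prop :=
  exists Ls : nat -> LS, leqL (Ls 0%N) L /\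
    forall n, A n = polypart (Ls n) /\ (0 < n -> 1 < size (A n))%N /\
      leqL (lmulL (lsubL (Ls n) (polyL (A n))) (Ls n.+1)) lone.

(* n(X) = n_0 + n_1 X + ... for n = n_0 + n_1 p + ... in base p *)
Definition natpoly (n : nat) : {poly F} :=
  \poly_(i < n.+1) (((n %/ p ^ i) %% p)%N%:R)%R.

Definition digit (c : F) : nat := nat_of_ord c.

(* x is the n-th point of the digital Kronecker sequence associated with M:
   {n(X) M} = sum_{i>=1} c_i X^{-i} and x = sum_{i>=1} c_i p^{-i}. *)
Definition kronecker_point (M : LS) (n : nat) (x : R) : Prop :=
  infinite_sum
    (fun i => Rdiv (INR (digit (lcoef (fracpart (lmulL (polyL (natpoly n)) M))
                                       (Z.of_nat i.+1))))
                   (pow (INR p) i.+1)) x.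

End Laurent.

Definition inRbox (lo x hi : R) : bool :=
  if Rle_dec lo x then (if Rlt_dec x hi then true else false) else false.

Definition is_net (p t m : nat) (x : nat -> R) (N : nat) : Prop :=
  (t <= m)%N /\
  forall a, (a < p ^ (m - t))%N ->
    (\sum_(j < p ^ m)
        (if inRbox (Rdiv (INR a) (pow (INR p) (m - t))) (x (N + j)%N)
                   (Rdiv (INR a.+1) (pow (INR p) (m - t))) then 1 else 0))%N
    = p ^ t.

Definition is_t_sequence (p t : nat) (x : nat -> R) : Prop :=
  (forall n, Rle 0 (x n) /\ Rlt (x n) 1) /\
  forall m k, (t < m)%N -> is_net p t m x (k * p ^ m).

(* Main.v *)
Require Import Defs.
From Stdlib Require Import Reals ZArith Lia Lra Classical.

Module RealPart.
Local Open Scope R_scope.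

Section RealB.
Variable p : nat.
Variable dd : nat -> nat.
Hypothesis hp : (2 <= p)%nat.
Hypothesis hdd : forall i, (dd i < p)%nat.

Fixpoint hh (s : nat) : nat := match s with O => O | S s => (p * hh s + dd s)%nat end.

Let P := INR p.
Let f := fun i => INR (dd i) / P ^ (S i).

Fixpoint G (N : nat) : R := match N with O => 0 | S N => G N + INR (dd N) / P ^ (S N) end.

Lemma P_gt1 : 1 < P.
Proof. unfold P. replace 1 with (INR 1) by reflexivity. apply lt_INR. lia. Qed.

Lemma Ppow_pos n : 0 < P ^ n.
Proof. apply pow_lt. pose proof P_gt1. lra. Qed.

Lemma sum_G N : sum_f_R0 f N = G (S N).
Proof. induction N as [|N IH]; simpl. unfold f; simpl; lra. rewrite IH. unfold f. simpl. lra. Qed.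

Lemma G_hh s : G s = INR (hh s) / P ^ s.
Proof.
induction s as [|s IH]; simpl. unfold Rdiv; lra.
rewrite IH, plus_INR, mult_INR. fold P.
pose proof (Ppow_pos s). pose proof P_gt1.
field. lra.
Qed.

Lemma G_bound s i0 : (s <= i0)%nat -> (dd i0 < p - 1)%nat -> forall k,
  G s <= G (s + k) /\
  G (s + k) <= G s + / P ^ s - / P ^ (s + k) - (if Nat.ltb i0 (s + k) then / P ^ (S i0) else 0).
Proof.
intros hs hi0 k. induction k as [|k [IH1 IH2]].
- rewrite Nat.add_0_r. destruct (Nat.ltb_spec i0 s) as [h|h]; [lia|]. lra.
- replace (s + S k)%nat with (S (s + k)) by lia.
  set (N := (s + k)%nat) in *.
  simpl G. simpl pow.
  pose proof (Ppow_pos N) as hpn. pose proof P_gt1 as hP.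
  set (u := / (P * P ^ N)).
  assert (hu : 0 < u) by (unfold u; apply Rinv_0_lt_compat; nra).
  assert (hPN : / P ^ N = P * u) by (unfold u; field; lra).
  assert (hd0 : 0 <= INR (dd N)) by apply pos_INR.
  assert (hd1 : INR (dd N) + 1 <= P).
  { unfold P. rewrite <- S_INR. apply le_INR. specialize (hdd N). lia. }
  replace (INR (dd N) / (P * P ^ N)) with (INR (dd N) * u) by (unfold u, Rdiv; ring).
  rewrite hPN in IH2.
  split. nra.
  destruct (Nat.ltb_spec i0 N) as [h1|h1]; destruct (Nat.ltb_spec i0 (S N)) as [h2|h2]; try lia.
  + change (/ (P * P ^ i0)) with (/ P ^ S i0). nra.
  + assert (hd2 : INR (dd N) + 2 <= P).
    { unfold P. replace (INR (dd N) + 2) with (INR (S (S (dd N)))) by (rewrite !S_INR; ring).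
      apply le_INR. assert (N = i0) by lia. rewrite H. lia. }
    assert (e : / (P * P ^ i0) = u) by (unfold u; replace i0 with N by lia; reflexivity).
    rewrite e. nra.
  + nra.
Qed.

Lemma lim_le (g : nat -> R) x b N0 : infinite_sum g x ->
  (forall n, (N0 <= n)%nat -> sum_f_R0 g n <= b) -> x <= b.
Proof.
intros hx hb. destruct (Rle_or_lt x b) as [h|h]; auto.
destruct (hx (x - b)) as [N hN]; [lra|].
specialize (hN (max N N0) (Nat.le_max_l _ _)). specialize (hb (max N N0) (Nat.le_max_r _ _)).
unfold R_dist in hN. rewrite Rabs_minus_sym in hN.
pose proof (Rle_abs (x - sum_f_R0 g (max N N0))). lra.
Qed.

Lemma lim_ge (g : nat -> R) x b N0 : infinite_sum g x ->
  (forall n, (N0 <= n)%nat -> b <= sum_f_R0 g n) -> b <= x.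
Proof.
intros hx hb. destruct (Rle_or_lt b x) as [h|h]; auto.
destruct (hx (b - x)) as [N hN]; [lra|].
specialize (hN (max N N0) (Nat.le_max_l _ _)). specialize (hb (max N N0) (Nat.le_max_r _ _)).
unfold R_dist in hN.
pose proof (Rle_abs (sum_f_R0 g (max N N0) - x)). lra.
Qed.

Lemma real_bound x s i0 : (s <= i0)%nat -> (dd i0 < p - 1)%nat ->
  infinite_sum (fun i => INR (dd i) / INR p ^ S i) x ->
  INR (hh s) / INR p ^ s <= x /\ x < (INR (hh s) + 1) / INR p ^ s.
Proof.
intros hs hi0 hx. fold P in hx |- *.
pose proof (Ppow_pos s). pose proof (Ppow_pos (S i0)).
assert (hb : forall n, (s + i0 <= n)%nat ->
  G s <= sum_f_R0 f n <= G s + / P ^ s - / P ^ (S i0)).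
{ intros n hn. rewrite sum_G.
  destruct (G_bound s i0 hs hi0 (S n - s)) as [h1 h2].
  replace (s + (S n - s))%nat with (S n) in h1, h2 by lia.
  destruct (Nat.ltb_spec i0 (S n)) as [h|h]; [|lia].
  pose proof (Ppow_pos (S n)). assert (0 < / P ^ S n) by (apply Rinv_0_lt_compat; lra). lra. }
rewrite <- G_hh.
assert (e : (INR (hh s) + 1) / P ^ s = G s + / P ^ s) by (rewrite G_hh; field; lra).
rewrite e. split.
- apply (lim_ge f x _ (s + i0)%nat hx). intros n hn; apply hb; auto.
- assert (x <= G s + / P ^ s - / P ^ S i0).
  { apply (lim_le f x _ (s + i0)%nat hx). intros n hn; apply hb; auto. }
  assert (0 < / P ^ S i0) by (apply Rinv_0_lt_compat; lra). lra.
Qed.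

End RealB.

Lemma inbox_iff (Q x : R) (h a : nat) : 0 < Q ->
  INR h / Q <= x < (INR h + 1) / Q ->
  (if Rle_dec (INR a / Q) x then (if Rlt_dec x (INR (S a) / Q) then true else false) else false)
  = Nat.eqb h a.
Proof.
intros hQ [h1 h2].
assert (k1 : forall u v, u / Q <= v / Q -> u <= v).
{ intros u v huv. apply Rmult_le_reg_r with (/ Q). apply Rinv_0_lt_compat; lra. exact huv. }
assert (k2 : forall u v, u / Q < v / Q -> u < v).
{ intros u v huv. apply Rmult_lt_reg_r with (/ Q). apply Rinv_0_lt_compat; lra. exact huv. }
rewrite S_INR.
destruct (Rle_dec (INR a / Q) x) as [ha|ha]; destruct (Rlt_dec x ((INR a + 1) / Q)) as [hb|hb];
  destruct (Nat.eqb_spec h a) as [e|e]; auto.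
- exfalso. apply e.
  assert (INR a < INR h + 1) by (apply k2; lra).
  assert (INR h < INR a + 1) by (apply k2; lra).
  rewrite <- S_INR in *. apply INR_lt in H. apply INR_lt in H0. lia.
- subst. lra.
- subst. lra.
- subst. lra.
Qed.

Lemma real_bound0 p dd x i0 : (2 <= p)%nat -> (forall i, (dd i < p)%nat) -> (dd i0 < p - 1)%nat ->
  infinite_sum (fun i => INR (dd i) / INR p ^ S i) x -> 0 <= x /\ x < 1.
Proof.
intros h1 h2 h3 hx.
destruct (real_bound p dd h1 h2 x 0 i0 (Nat.le_0_l _) h3 hx) as [a b].
simpl in a, b. unfold Rdiv in a, b. rewrite Rinv_1 in a, b. lra.
Qed.

End RealPart.
Import RealPart.

From HB Require Import structures.
From mathcomp Require Import all_boot all_order all_algebra.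
From mathcomp Require Import zify.
Set Implicit Arguments. Unset Strict Implicit. Unset Printing Implicit Defensive.
Import GRing.Theory.

Section ZSum.
Variable R : comPzRingType.
Local Open Scope Z_scope.

Definition zsum (lo hi : Z) (F : Z -> R) : R :=
  \sum_(0 <= k < Z.to_nat (hi - lo)) F (Z.add lo (Z.of_nat k)).

Lemma zsum_split lo mid hi F : (lo <= mid <= hi) ->
  zsum lo hi F = (zsum lo mid F + zsum mid hi F)%R.
Proof.
move=> H.
have e: Z.to_nat (hi - lo) = (Z.to_nat (mid - lo) + Z.to_nat (hi - mid))%N by lia.
rewrite /zsum e (big_cat_nat _ (leq_addr _ _)) //=; congr (_ + _)%R.
rewrite -{1}(add0n (Z.to_nat (mid-lo))) big_addn.
rewrite (_ : (_ + _ - _)%N = Z.to_nat (hi - mid)); last lia.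
by apply: eq_bigr => k _; congr F; lia.
Qed.

Lemma zsum_ext lo hi F G : (forall z, (lo <= z < hi) -> F z = G z) ->
  zsum lo hi F = zsum lo hi G.
Proof. move=> H; apply: eq_big_nat => k /andP[_ hk]; apply: H; lia. Qed.

Lemma zsum0 lo hi F : (forall z, (lo <= z < hi) -> F z = 0%R) -> zsum lo hi F = 0%R.
Proof. move=> H; rewrite (zsum_ext (G := fun _ => 0%R)) // /zsum big1 //. Qed.

Lemma zsum1 lo F : zsum lo (lo + 1) F = F lo.
Proof.
rewrite /zsum (_ : Z.to_nat (lo + 1 - lo) = 1%N); last lia.
rewrite big_nat1; congr F; lia.
Qed.

Lemma zsum_empty lo hi F : (hi <= lo) -> zsum lo hi F = 0%R.
Proof. move=> H; rewrite /zsum (_ : Z.to_nat (hi - lo) = 0%N) ?big_geq //; lia. Qed.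

Lemma zsum_restrict lo a b hi F : (lo <= a) -> (b <= hi) ->
  (forall z, (z < a \/ b <= z) -> F z = 0%R) -> zsum lo hi F = zsum a b F.
Proof.
move=> h1 h2 H.
case: (Z.le_gt_cases a b) => hab.
  rewrite (zsum_split F (mid := a)); last lia.
  rewrite (zsum_split F (lo := a) (mid := b)); last lia.
  rewrite (zsum0 (lo := lo)) ?(zsum0 (lo := b)) ?add0r ?addr0 //.
    by move=> z hz; apply: H; lia.
  by move=> z hz; apply: H; lia.
rewrite [zsum a b F]zsum_empty; last lia.
by apply: zsum0 => z _; apply: H; lia.
Qed.

Lemma zsum_eq_support a1 b1 a2 b2 F :
  (forall z, (z < a1 \/ b1 <= z) -> F z = 0%R) ->
  (forall z, (z < a2 \/ b2 <= z) -> F z = 0%R) ->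
  zsum a1 b1 F = zsum a2 b2 F.
Proof.
move=> H1 H2.
have H: forall z, (z < Z.max a1 a2 \/ Z.min b1 b2 <= z) -> F z = 0%R.
  move=> z [] hz; case: (Z.le_gt_cases a1 a2) => ha; case: (Z.le_gt_cases b1 b2) => hb.
  all: try (apply: H1; lia). all: try (apply: H2; lia).
case: (Z.le_gt_cases (Z.max a1 a2) (Z.min b1 b2)) => hab.
  rewrite (zsum_restrict (a := Z.max a1 a2) (b := Z.min b1 b2)) //; try lia.
  by rewrite [RHS](zsum_restrict (a := Z.max a1 a2) (b := Z.min b1 b2)) //; lia.
by rewrite (zsum0 (lo := a1)) ?(zsum0 (lo := a2)) // => z _; apply: H; lia.
Qed.

Lemma zsum_shift lo hi c F :
  zsum lo hi (fun z => F (z + c)) = zsum (lo + c) (hi + c) F.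
Proof.
rewrite /zsum (_ : Z.to_nat (hi + c - (lo + c)) = Z.to_nat (hi - lo)); last lia.
by apply: eq_bigr => k _; congr F; lia.
Qed.

Lemma zsum_rev lo hi F :
  zsum lo hi (fun z => F (- z)) = zsum (- hi + 1) (- lo + 1) F.
Proof.
rewrite /zsum (_ : Z.to_nat (- lo + 1 - (- hi + 1)) = Z.to_nat (hi - lo)); last lia.
rewrite big_nat_rev; apply: eq_big_nat => k /andP[_ hk]; congr F; lia.
Qed.

Lemma zsumD lo hi F G : zsum lo hi (fun z => F z + G z)%R = (zsum lo hi F + zsum lo hi G)%R.
Proof. by rewrite /zsum big_split. Qed.

Lemma zsumMl lo hi c F : zsum lo hi (fun z => c * F z)%R = (c * zsum lo hi F)%R.
Proof. by rewrite /zsum mulr_sumr. Qed.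

Lemma zsumMr lo hi c F : zsum lo hi (fun z => F z * c)%R = (zsum lo hi F * c)%R.
Proof. by rewrite /zsum mulr_suml. Qed.

Lemma zsum_exchange lo1 hi1 lo2 hi2 (F : Z -> Z -> R) :
  zsum lo1 hi1 (fun a => zsum lo2 hi2 (fun b => F a b)) =
  zsum lo2 hi2 (fun b => zsum lo1 hi1 (fun a => F a b)).
Proof. by rewrite /zsum exchange_big_nat. Qed.

Lemma zsum_ord n F : zsum 0 (Z.of_nat n) F = (\sum_(k < n) F (Z.of_nat k))%R.
Proof.
rewrite /zsum (_ : Z.to_nat (Z.of_nat n - 0) = n); last lia.
by rewrite big_mkord; apply: eq_bigr => k _; congr F; lia.
Qed.

End ZSum.

Unset Implicit Arguments. Set Strict Implicit.


Section Coef.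
Variable p : nat.
Local Notation F := 'F_p.
Local Notation LS := (laurent p).
Local Open Scope Z_scope.

Lemma lcoef_lt (M : LS) z : z < lw M -> lcoef M z = 0%R.
Proof. by move=> h; rewrite /lcoef (_ : Z.leb _ _ = false) //; apply/Z.leb_gt. Qed.

Lemma lcoef_ge (M : LS) z : lw M <= z -> lcoef M z = lc M (Z.to_nat (z - lw M)).
Proof. by move=> h; rewrite /lcoef (_ : Z.leb _ _ = true) //; apply/Z.leb_le. Qed.

Lemma lcoef_laurent_of w f z :
  lcoef (@laurent_of p w f) z = if Z.leb w z then f z else 0%R.
Proof.
rewrite /lcoef /=; case: (Z.leb_spec w z) => h //; congr f; lia.
Qed.

Definition pc (Q : {poly F}) (r : Z) : F := if Z.leb 0 r then (Q`_(Z.to_nat r))%R else 0%R.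

Lemma coef_geZ (Q : {poly F}) r : Z.of_nat (size Q) <= r -> (Q`_(Z.to_nat r))%R = 0%R.
Proof.
move=> h; rewrite nth_default //; apply/leP; apply/Nat2Z.inj_le.
rewrite Z2Nat.id; first exact: h.
apply: Z.le_trans h; lia.
Qed.

Lemma pc_out (Q : {poly F}) r : r < 0 \/ Z.of_nat (size Q) <= r -> pc Q r = 0%R.
Proof.
rewrite /pc; case: (Z.leb_spec 0 r) => h [] h' //; first lia.
exact: coef_geZ.
Qed.

Lemma lcoef_polyL (Q : {poly F}) z : lcoef (polyL Q) z = pc Q (- z).
Proof.
rewrite /polyL lcoef_laurent_of /pc.
case: (Z.leb_spec (- Z.of_nat (size Q)) z) => h1; case: (Z.leb_spec z 0) => h2;
  case: (Z.leb_spec 0 (-z)) => h3 //; try lia.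
by rewrite coef_geZ //; lia.
Qed.

Lemma lw_polyL (Q : {poly F}) : lw (polyL Q) = - Z.of_nat (size Q).
Proof. by []. Qed.

Lemma lcoef_lsubL (M N : LS) z : lcoef (lsubL M N) z = (lcoef M z - lcoef N z)%R.
Proof.
rewrite /lsubL lcoef_laurent_of; case: (Z.leb_spec (Z.min (lw M) (lw N)) z) => h //.
by rewrite !lcoef_lt ?subr0 //; lia.
Qed.

Lemma lcoef_fracpart (M : LS) z : 1 <= z -> lcoef (fracpart M) z = lcoef M z.
Proof.
move=> h; rewrite /fracpart lcoef_laurent_of; case: (Z.leb_spec (Z.max 1 (lw M)) z) => h' //.
by rewrite lcoef_lt //; lia.
Qed.

Lemma lcoef_lone z : lcoef (lone p) z = if Z.eqb z 0 then 1%R else 0%R.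
Proof.
rewrite /lcoef /lone /=; case: (Z.leb_spec 0 z) => h; case: (Z.eqb_spec z 0) => h' //; try lia.
  by rewrite h'.
by rewrite (_ : (Z.to_nat (z - 0) == 0)%N = false) //; apply/eqP; lia.
Qed.

Lemma lcoef_lmulL (M N : LS) z : lcoef (lmulL M N) z =
  zsum (lw M) (z - lw N + 1) (fun a => lcoef M a * lcoef N (Z.sub z a))%R.
Proof.
rewrite /lcoef /lmulL /= /zsum.
case: (Z.leb_spec (lw M + lw N) z) => h.
  rewrite (_ : Z.to_nat (z - lw N + 1 - lw M) = (Z.to_nat (z - (lw M + lw N))).+1); last lia.
  rewrite big_mkord; apply: eq_bigr => [[k hk]] _ /=.
  rewrite (_ : Z.leb (lw M) _ = true); last by apply/Z.leb_le; lia.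
  rewrite (_ : Z.leb (lw N) _ = true); last by apply/Z.leb_le; lia.
  congr (lc M _ * lc N _)%R; lia.
rewrite (_ : Z.to_nat (z - lw N + 1 - lw M) = 0%N) ?big_geq //; lia.
Qed.

Definition pmul (Q : {poly F}) (f : Z -> F) (z : Z) : F :=
  zsum 0 (Z.of_nat (size Q)) (fun r => pc Q r * f (Z.add z r))%R.

Lemma pmul_widen (Q : {poly F}) f z N : (size Q <= N)%N ->
  pmul Q f z = zsum 0 (Z.of_nat N) (fun r => pc Q r * f (Z.add z r))%R.
Proof.
move=> /leP hN; apply: zsum_eq_support => r hr; rewrite pc_out ?mul0r //; lia.
Qed.

Lemma pmul_ext (Q : {poly F}) f g z : (forall w, f w = g w) -> pmul Q f z = pmul Q g z.
Proof. by move=> H; apply: zsum_ext => r _; rewrite H. Qed.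

Lemma pmul0 (f : Z -> F) z : pmul 0 f z = 0%R.
Proof. by rewrite /pmul size_poly0 zsum_empty. Qed.

Lemma pmulD (P Q : {poly F}) f z : pmul (P + Q) f z = (pmul P f z + pmul Q f z)%R.
Proof.
set N := maxn (size P) (size Q).
rewrite !(pmul_widen _ _ _ N) ?leq_maxl ?leq_maxr //; last first.
  by apply: leq_trans (size_polyD _ _) _.
rewrite -zsumD; apply: zsum_ext => r _; rewrite -mulrDl; congr (_ * _)%R.
by rewrite /pc; case: (Z.leb _ _); rewrite ?coefD ?addr0.
Qed.

Lemma pmulZ c (Q : {poly F}) f z : pmul (c *: Q) f z = (c * pmul Q f z)%R.
Proof.
rewrite !(pmul_widen _ _ _ (size Q)) ?size_scale_leq // -zsumMl.
apply: zsum_ext => r _; rewrite mulrA; congr (_ * _)%R.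
by rewrite /pc; case: (Z.leb _ _); rewrite ?coefZ ?mulr0.
Qed.

Lemma pmulC (c : F) f z : pmul c%:P f z = (c * f z)%R.
Proof.
rewrite (pmul_widen _ _ _ 1) ?size_polyC ?leq_b1 //.
rewrite (_ : Z.of_nat 1 = 0 + 1) // zsum1 /pc /= coefC /=; congr (_ * f _)%R; lia.
Qed.

Lemma pmul_mulX (P : {poly F}) f z : pmul (P * 'X) f z = pmul P f (z + 1).
Proof.
rewrite (pmul_widen _ _ _ (size P).+1); last first.
  by apply: leq_trans (size_polyMleq _ _) _; rewrite size_polyX addn2.
rewrite (zsum_split _ (mid := 1)); last lia.
rewrite (_ : 1 = 0 + 1) // zsum1 {1}/pc /= coefMX /= mul0r add0r.
rewrite (_ : Z.pos (Pos.of_succ_nat (size P)) = Z.of_nat (size P) + 1); last lia.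
have -> : forall G : Z -> F, zsum 1 (Z.of_nat (size P) + 1) G = zsum 0 (Z.of_nat (size P)) (fun r => G (r + 1)).
  by move=> G; rewrite (zsum_shift 0 _ 1 G).
rewrite /pmul; apply: zsum_ext => r hr; congr (_ * f _)%R; last lia.
rewrite /pc; case: (Z.leb_spec 0 r) => h1; case: (Z.leb_spec 0 (r + 1)) => h2; try lia.
rewrite coefMX (_ : (Z.to_nat (r + 1) == 0)%N = false); last by apply/eqP; lia.
congr (P`_ _)%R; lia.
Qed.

Lemma pmul_mul (P1 P2 : {poly F}) f z :
  pmul (P1 * P2) f z = pmul P1 (pmul P2 f) z.
Proof.
elim/poly_ind: P1 z => [|P c IH] z; first by rewrite mul0r !pmul0.
rewrite mulrDl mulrAC pmulD pmul_mulX IH mul_polyC pmulZ.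
by rewrite pmulD pmul_mulX pmulC.
Qed.

Lemma pmulXn n f z : pmul ('X^n) f z = f (z + Z.of_nat n).
Proof.
elim: n z => [|n IH] z.
  by rewrite expr0 -polyC1 pmulC mul1r; congr f; lia.
by rewrite exprSr pmul_mulX IH; congr f; lia.
Qed.

Lemma pmulXsub1 f z : pmul ('X - 1) f z = (f (Z.add z 1) - f z)%R.
Proof.
rewrite -polyC1 -polyCN pmulD pmulC -[('X)%R]mul1r pmul_mulX -polyC1 pmulC.
by rewrite !mul1r mulN1r.
Qed.

Lemma lcoef_mul_polyL (Q : {poly F}) (M : LS) z :
  lcoef (lmulL (polyL Q) M) z = pmul Q (lcoef M) z.
Proof.
set G := (fun a => (lcoef (polyL Q) a * lcoef M (Z.sub z a))%R).
rewrite lcoef_lmulL lw_polyL /pmul.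
have -> : zsum 0 (Z.of_nat (size Q)) (fun r => (pc Q r * lcoef M (Z.add z r))%R)
   = zsum 0 (Z.of_nat (size Q)) (fun r => G (Z.opp r)).
  by apply: zsum_ext => r _; rewrite /G lcoef_polyL Z.opp_involutive Z.sub_opp_r.
rewrite zsum_rev.
apply: zsum_eq_support => a ha; rewrite /G.
  case: ha => ha; first by rewrite lcoef_lt ?mul0r // lw_polyL.
  by rewrite [lcoef M _]lcoef_lt ?mulr0 //; lia.
rewrite lcoef_polyL pc_out ?mul0r //; lia.
Qed.

End Coef.
Arguments pc {p}.
Arguments pmul {p}.
Arguments pmul_widen {p}.



Section Key.
Variable p : nat.
Local Notation F := 'F_p.
Local Notation LS := (laurent p).
Local Open Scope Z_scope.

Variables (Ls : nat -> LS) (A : nat -> {poly F}) (K : nat).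
Hypothesis hA : forall n, A n = polypart (Ls n).
Hypothesis hsize : forall n, (0 < n)%N -> (1 < size (A n))%N.
Hypothesis hprod : forall n, leqL (lmulL (lsubL (Ls n) (polyL (A n))) (Ls n.+1)) (lone p).
Hypothesis hK : forall d, (0 < d)%N -> ((size (A d)).-1 <= K)%N.

Definition ell n := lcoef (Ls n).
Definition theta n z : F := if Z.leb 1 z then ell n z else 0%R.

Lemma ell_neg n (j : nat) : ell n (- Z.of_nat j) = ((A n)`_j)%R.
Proof.
rewrite hA /polypart coef_poly /ell.
case: ltnP => h; first by congr lcoef; lia.
rewrite lcoef_lt //; lia.
Qed.

Lemma ell_nonpos n z : z <= 0 -> ell n z = ((A n)`_(Z.to_nat (- z)))%R.
Proof. by move=> h; rewrite -ell_neg; congr ell; lia. Qed.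

Lemma ell_low n z : z < - Z.of_nat (size (A n)).-1 -> ell n z = 0%R.
Proof.
move=> h; rewrite ell_nonpos; last lia.
rewrite coef_geZ //.
have : (0 < size (A n) \/ size (A n) = 0)%N by lia.
case=> h'; first lia.
by rewrite h' /=; lia.
Qed.

Lemma lcoef_sub n z : lcoef (lsubL (Ls n) (polyL (A n))) z = theta n z.
Proof.
rewrite lcoef_lsubL lcoef_polyL /theta -/(ell n z).
case: (Z.leb_spec 1 z) => h.
  by rewrite pc_out ?subr0 //; lia.
rewrite /pc (_ : Z.leb 0 (- z) = true); last by apply/Z.leb_le; lia.
by rewrite ell_nonpos ?subrr //; lia.
Qed.

Lemma prod_window n z W1 W2 :
  (forall a, a < W1 \/ W2 <= a -> (theta n a * ell n.+1 (Z.sub z a))%R = 0%R) ->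
  zsum W1 W2 (fun a => theta n a * ell n.+1 (Z.sub z a))%R = if Z.eqb z 0 then 1%R else 0%R.
Proof.
move=> Hw; rewrite -lcoef_lone -(hprod n z) lcoef_lmulL.
rewrite (zsum_ext (G := fun a => (theta n a * ell n.+1 (Z.sub z a))%R)); last first.
  by move=> a _; rewrite lcoef_sub.
apply: zsum_eq_support => // a [] ha.
  by rewrite -lcoef_sub lcoef_lt ?mul0r.
by rewrite /ell lcoef_lt ?mulr0 //; lia.
Qed.


Definition dd n := (size (A n.+1)).-1.

Lemma dd_pos n : (0 < dd n)%N.
Proof. by rewrite /dd -subn1 subn_gt0 (hsize n.+1 (ltn0Sn n)). Qed.

Lemma dd_K n : (dd n <= K)%N.
Proof. exact: (hK n.+1 (ltn0Sn n)). Qed.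

Lemma c0_neq0 n : ell n.+1 (- Z.of_nat (dd n)) != 0%R.
Proof.
rewrite ell_neg /dd -lead_coefE lead_coef_eq0 -size_poly_eq0.
by have := hsize n.+1 (ltn0Sn n); case: (size _).
Qed.

Lemma theta_low n a0 : a0 < Z.of_nat (dd n) -> theta n a0 = 0%R.
Proof.
suff: forall k : nat, forall a, a <= Z.of_nat k -> a < Z.of_nat (dd n) -> theta n a = 0%R.
  by move=> H ha; apply: (H (Z.to_nat a0)) => //; lia.
elim=> [|k IH] b hb hbd.
  by rewrite /theta (_ : Z.leb 1 b = false) //; apply/Z.leb_gt; lia.
case: (Z.le_gt_cases b (Z.of_nat k)) => hbk; first exact: IH.
case: (Z.le_gt_cases b 0) => hb0.
  by rewrite /theta (_ : Z.leb 1 b = false) //; apply/Z.leb_gt; lia.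
have := prod_window n (b - Z.of_nat (dd n)) b (b + 1).
rewrite zsum1 (_ : Z.eqb _ 0 = false); last by apply/Z.eqb_neq; lia.
rewrite (_ : b - Z.of_nat (dd n) - b = - Z.of_nat (dd n)); last lia.
move=> H; have {}H : (theta n b * ell n.+1 (- Z.of_nat (dd n)))%R = 0%R.
  apply: H => a [] ha.
    by rewrite IH ?mul0r //; lia.
  by rewrite ell_low ?mulr0 // -/(dd n); lia.
by move/eqP: H; rewrite mulf_eq0 (negbTE (c0_neq0 n)) orbF => /eqP.
Qed.

Lemma theta_d n : (theta n (Z.of_nat (dd n)) * ell n.+1 (- Z.of_nat (dd n)))%R = 1%R.
Proof.
have := prod_window n 0 (Z.of_nat (dd n)) (Z.of_nat (dd n) + 1).
rewrite zsum1 /=.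
apply=> a [] ha.
  by rewrite theta_low ?mul0r.
by rewrite ell_low ?mulr0 // -/(dd n); lia.
Qed.

Lemma theta_d_neq0 n : theta n (Z.of_nat (dd n)) != 0%R.
Proof. by apply/eqP => h; have := theta_d n; rewrite h mul0r => /eqP; rewrite eq_sym oner_eq0. Qed.

Lemma pmul_theta n (Q : {poly F}) i : 1 <= i -> pmul Q (ell n) i = pmul Q (theta n) i.
Proof.
move=> hi; apply: zsum_ext => r hr; rewrite /theta (_ : Z.leb 1 (i + r) = true) //.
by apply/Z.leb_le; lia.
Qed.

Lemma g_at n (Q : {poly F}) : Q != 0%R ->
  pmul Q (theta n) (Z.of_nat (dd n) - Z.of_nat (size Q).-1)
  = (lead_coef Q * theta n (Z.of_nat (dd n)))%R.
Proof.
move=> hQ; set q := (size Q).-1.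
have hS : size Q = q.+1 by rewrite /q prednK // lt0n size_poly_eq0.
rewrite /pmul (zsum_eq_support (a2 := Z.of_nat q) (b2 := Z.of_nat q + 1)).
- rewrite zsum1 /pc (_ : Z.leb 0 (Z.of_nat q) = true); last by apply/Z.leb_le; lia.
  rewrite lead_coefE -/q Nat2Z.id; congr (_ * theta n _)%R; lia.
- by move=> r hr; rewrite pc_out ?mul0r.
- move=> r [] hr.
    case: (Z.le_gt_cases 0 r) => h0; last by rewrite pc_out ?mul0r //; lia.
    by rewrite theta_low ?mulr0 //; lia.
  by rewrite pc_out ?mul0r // hS; lia.
Qed.

Lemma key_lemma : forall sz n (Q : {poly F}), (size Q <= sz)%N -> Q != 0%R ->
  exists i, 1 <= i <= Z.of_nat ((size Q).-1 + K) /\ pmul Q (ell n) i != 0%R.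
Proof.
elim=> [|sz IH] n Q hs hQ.
  by move: hQ; rewrite -size_poly_eq0; move: hs; case: (size Q).
set q := (size Q).-1.
have hS : size Q = q.+1 by rewrite /q prednK // lt0n size_poly_eq0.
have hgnz : pmul Q (theta n) (Z.of_nat (dd n) - Z.of_nat q) != 0%R.
  by rewrite g_at // mulf_neq0 ?lead_coef_eq0 ?theta_d_neq0.
have hdK := dd_K n; have hd0 := dd_pos n.
case: (ltnP q (dd n)) => hqd.
  exists (Z.of_nat (dd n) - Z.of_nat q); split; first lia.
  by rewrite pmul_theta //; lia.
apply: NNPP => Hne.
have H0 : forall i, 1 <= i <= Z.of_nat (q + K) -> pmul Q (theta n) i = 0%R.
  move=> i hi; rewrite -pmul_theta; last lia.
  apply/eqP; apply/negPn/negP => hnz; apply: Hne; exists i; split=> //.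
set g := pmul Q (theta n).
set R := (\poly_(u < (q - dd n).+1) g (Z.opp (Z.of_nat u)))%R.
have sR : size R = (q - dd n).+1.
  rewrite /R size_poly_eq //=; move: hgnz; congr (g _ != _); lia.
have hR0 : R != 0%R by rewrite -size_poly_eq0 sR.
have [i [hi hRi]] := IH n.+1 R ltac:(rewrite sR; lia) hR0.
rewrite sR /= in hi.
apply: (negP hRi); apply/eqP.
set G := fun b => (g b * ell n.+1 (Z.sub i b))%R.
have e1 : pmul R (ell n.+1) i = zsum (Z.of_nat (dd n) - Z.of_nat q) 1 G.
  rewrite (pmul_widen _ _ _ (q - dd n).+1) ?sR //.
  rewrite (zsum_ext (G := fun u => G (- u))).
    by rewrite zsum_rev; congr zsum; lia.
  move=> u hu; rewrite /G /pc (_ : Z.leb 0 u = true); last by apply/Z.leb_le; lia.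
  rewrite /R coef_poly (_ : (Z.to_nat u < (q - dd n).+1)%N = true); last by apply/ltP; lia.
  congr (g _ * ell _ _)%R; lia.
have e2 : zsum 1 (i + Z.of_nat (dd n) + 1) G = 0%R.
  by apply: zsum0 => b hb; rewrite /G /g H0 ?mul0r //; lia.
have e3 : zsum (Z.of_nat (dd n) - Z.of_nat q) (i + Z.of_nat (dd n) + 1) G = 0%R.
  rewrite /G /g /pmul.
  rewrite (zsum_ext (G := fun b => zsum 0 (Z.of_nat (size Q))
     (fun r => pc Q r * theta n (Z.add b r) * ell n.+1 (Z.sub i b)))%R); last first.
    by move=> b _; rewrite -zsumMr.
  rewrite zsum_exchange; apply: zsum0 => r hr.
  rewrite (zsum_ext (G := fun b => pc Q r *
       (fun a => theta n a * ell n.+1 (Z.sub (Z.add i r) a)) (Z.add b r)))%R; last first.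
    move=> b _ /=; rewrite mulrA; congr (_ * ell _ _)%R; lia.
  rewrite zsumMl (zsum_shift _ _ r (fun a => theta n a * ell n.+1 (Z.sub (Z.add i r) a))%R) prod_window.
    by rewrite (_ : Z.eqb _ 0 = false) ?mulr0 //; apply/Z.eqb_neq; lia.
  move=> a [] ha.
    by rewrite theta_low ?mul0r //; rewrite hS in hr; lia.
  by rewrite ell_low ?mulr0 // -/(dd n); lia.
rewrite e1; move: e3; rewrite (zsum_split _ (mid := 1)) ?e2 ?addr0 //; lia.
Qed.

End Key.



Section Digits.
Variable p : nat.
Hypothesis hp : prime p.
Local Notation F := 'F_p.

Lemma p_gt1 : (1 < p)%N. Proof. exact: prime_gt1. Qed.
Lemma p_gt0 : (0 < p)%N. Proof. exact: prime_gt0. Qed.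

Lemma digit_lt (c : F) : (digit c < p)%N.
Proof. by apply: leq_trans (ltn_ord c) _; rewrite Fp_cast. Qed.

Lemma digit_nat n : digit ((n%:R)%R : F) = n %% p.
Proof. exact: val_Fp_nat. Qed.

Lemma digit_natr (c : F) : (((digit c)%:R)%R : F) = c.
Proof. by apply: val_inj; rewrite /= val_Fp_nat // modn_small // digit_lt. Qed.

Lemma coef_natpoly n r : ((natpoly p n)`_r)%R = ((n %/ p ^ r) %% p)%:R%R.
Proof.
rewrite coef_poly; case: ltnP => // h.
rewrite divn_small ?mod0n //.
by apply: leq_trans h _; apply: ltnW; apply: ltn_expl; exact: p_gt1.
Qed.

Lemma mod_step a s : a %% p ^ s.+1 = a %% p ^ s + (a %/ p ^ s %% p) * p ^ s.
Proof.
have hD : (0 < p ^ s)%N by rewrite expn_gt0 p_gt0.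
set D := p ^ s; set q := a %/ D; set r := a %% D; set c := q %% p.
have hr : (r < D)%N by rewrite ltn_pmod.
have hc : (c < p)%N by rewrite ltn_pmod // p_gt0.
have ha : a = (q %/ p) * (p * D) + (c * D + r).
  rewrite {1}(divn_eq a D) -/q -/r {1}(divn_eq q p) -/c; nia.
rewrite expnS -/D {1}ha modnMDl modn_small //; nia.
Qed.

Lemma sum_digits a s : \sum_(i < s) (a %/ p ^ i %% p) * p ^ i = a %% p ^ s.
Proof.
elim: s => [|s IH]; first by rewrite big_ord0 expn0 modn1.
by rewrite big_ord_recr /= IH mod_step.
Qed.

Lemma digits_inj m j1 j2 : (j1 < p ^ m)%N -> (j2 < p ^ m)%N ->
  (forall r, (r < m)%N -> j1 %/ p ^ r %% p = j2 %/ p ^ r %% p) -> j1 = j2.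
Proof.
move=> h1 h2 H; rewrite -(modn_small h1) -(modn_small h2) -!sum_digits.
by apply: eq_bigr => i _; rewrite H.
Qed.

Definition dig m j : 'rV[F]_m := \row_(r < m) ((j %/ p ^ r) %% p)%:R%R.

Lemma dig_inj m j1 j2 : (j1 < p ^ m)%N -> (j2 < p ^ m)%N -> dig m j1 = dig m j2 -> j1 = j2.
Proof.
move=> h1 h2 /rowP H; apply: (@digits_inj m j1 j2 h1 h2) => r hr.
have := H (Ordinal hr); rewrite !mxE => /(congr1 (@digit p)); rewrite !digit_nat !modn_mod //.
Qed.

Lemma card_rV m : #|{: 'rV[F]_m}| = p ^ m.
Proof. by rewrite card_mx card_Fp // mul1n. Qed.

Definition digo m (j : 'I_(p ^ m)) : 'rV[F]_m := dig m j.

Lemma digo_bij m : bijective (@digo m).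
Proof.
apply: inj_card_bij; last by rewrite card_ord card_rV.
by move=> j1 j2 /(@dig_inj m j1 j2 (ltn_ord j1) (ltn_ord j2)) H; apply: val_inj; exact: H.
Qed.

Definition enc s (w : 'rV[F]_s) := \sum_(i < s) digit (w ord0 i) * p ^ i.

Lemma enc_dig s a : enc s (dig s a) = a %% p ^ s.
Proof. by rewrite -sum_digits; apply: eq_bigr => i _; rewrite mxE digit_nat modn_mod. Qed.

Lemma enc_eq s (w : 'rV[F]_s) a : (a < p ^ s)%N -> (enc s w == a) = (w == dig s a).
Proof.
move=> ha.
have [g gK Kg] := digo_bij s.
have -> : w = dig s (g w) by have := Kg w.
rewrite enc_dig modn_small //; apply/eqP/eqP => [-> //|].
by move/dig_inj => -> //.
Qed.

End Digits.



Section LinAlg.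
Variable p : nat.
Hypothesis hp : prime p.
Local Notation F := 'F_p.
Local Open Scope ring_scope.

Lemma surj_of_inj m s (M : 'M[F]_(m, s)) :
  (forall d : 'rV[F]_s, M *m d^T = 0 -> d = 0) ->
  forall y : 'rV[F]_s, exists v : 'rV[F]_m, v *m M = y.
Proof.
move=> H y.
have: row_free M^T.
  rewrite -kermx_eq0; apply/eqP/row_matrixP => i; rewrite row0.
  apply: H; rewrite -[M in M *m _]trmxK -trmx_mul.
  have /sub_kermxP -> := row_sub i (kermx M^T).
  by rewrite trmx0.
case/row_freeP => Bm hB.
have e : Bm^T *m M = 1%:M.
  by rewrite -(trmxK M) -trmx_mul hB trmx1.
by exists (y *m Bm^T); rewrite -mulmxA e mulmx1.
Qed.

Lemma fiber_card m s (M : 'M[F]_(m, s)) (c0 : 'rV[F]_s) :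
  (forall y : 'rV[F]_s, exists v : 'rV[F]_m, v *m M = y) ->
  forall y, (#|[set v : 'rV[F]_m | (v *m M + c0 == y)%R]| * p ^ s)%N = (p ^ m)%N.
Proof.
move=> Hs.
set k0 := #|[set v : 'rV[F]_m | v *m M == 0]|.
have fib : forall y, #|[set v : 'rV[F]_m | v *m M + c0 == y]| = k0.
  move=> y; have [vy hvy] := Hs (y - c0).
  rewrite /k0 -(card_imset [set v : 'rV[F]_m | v *m M == 0] (addIr vy)); apply: eq_card => v.
  rewrite inE; apply/eqP/imsetP => [hv|[u]].
    exists (v - vy); last by rewrite subrK.
    by rewrite inE mulmxBl hvy -hv addrK subrr.
  rewrite inE => /eqP hu ->; rewrite mulmxDl hu hvy add0r subrK //.
move=> y; rewrite fib.
rewrite -(@card_rV p hp m) -(@card_rV p hp s).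
rewrite -[#|{: 'rV[F]_m}|]sum1_card (partition_big (fun v : 'rV[F]_m => v *m M + c0) predT) //=.
rewrite mulnC -sum_nat_const; apply: eq_bigr => z _.
by rewrite -(fib z) -sum1_card; apply: eq_bigl => v; rewrite !inE.
Qed.

End LinAlg.



Section Main.
Variable p : nat.
Hypothesis hp : prime p.
Local Notation F := 'F_p.
Variables (L : laurent p) (Ls : nat -> laurent p) (A : nat -> {poly F}) (K : nat) (B : {poly F}).
Hypothesis hL0 : leqL (Ls 0) L.
Hypothesis hA : forall n, A n = polypart (Ls n).
Hypothesis hsize : forall n, (0 < n)%N -> (1 < size (A n))%N.
Hypothesis hprod : forall n, leqL (lmulL (lsubL (Ls n) (polyL (A n))) (Ls n.+1)) (lone p).
Hypothesis hK : forall d, (0 < d)%N -> ((size (A d)).-1 <= K)%N.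
Hypothesis hB : B != 0%R.

Definition mu : Z -> F := pmul B (lcoef L).
Definition cn n : Z -> F := pmul (natpoly p n) mu.
Definition kdig n i := digit (lcoef (fracpart (lmulL (polyL (natpoly p n)) (lmulL (polyL B) L))) (Z.of_nat i.+1)).

Lemma kdigE n i : kdig n i = digit (cn n (Z.of_nat i.+1)).
Proof.
rewrite /kdig lcoef_fracpart; last lia.
rewrite lcoef_mul_polyL; congr digit; apply: pmul_ext => w; exact: lcoef_mul_polyL.
Qed.

Lemma KLB (D : {poly F}) : D != 0%R -> exists i,
  (Z.le 1 i /\ Z.le i (Z.of_nat ((size D).-1 + (size B).-1 + K))) /\ pmul D mu i != 0%R.
Proof.
move=> hD; have hDB : (D * B != 0)%R by rewrite mulf_neq0.
have [i [hi hne]] := key_lemma p Ls A K hA hsize hprod hK (size (D * B)%R) 0 (D * B)%R (leqnn _) hDB.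
exists i; split.
  move: hi; rewrite size_mul //.
  have : (0 < size D)%N by rewrite lt0n size_poly_eq0.
  have : (0 < size B)%N by rewrite lt0n size_poly_eq0.
  move: (size D) (size B) => a b; lia.
move: hne; rewrite pmul_mul (@pmul_ext p D _ mu) //.
by move=> w; apply: pmul_ext => w'; exact: hL0.
Qed.

Lemma Fm1 (c : F) : (p.-1 <= digit c)%N -> c = (-1)%R.
Proof.
move=> h; have hc := @digit_lt p hp c.
have e : digit c = p.-1 by lia.
rewrite -(@digit_natr p hp c) e.
by rewrite -subn1 natrB ?pchar_Fp_0 ?sub0r // prime_gt0.
Qed.

Lemma nonmax n s : exists i0, (s <= i0)%N /\ (kdig n i0 < p - 1)%N.
Proof.
apply: NNPP => H.
have H1 : forall i0, (s <= i0)%N -> cn n (Z.of_nat i0.+1) = (-1)%R.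
  move=> i0 hi0; apply: Fm1; rewrite -kdigE.
  case: (leqP p.-1 (kdig n i0)) => // hlt; exfalso; apply: H; exists i0; split=> //; lia.
case: (natpoly p n =P 0%R) => hN.
  have := H1 s (leqnn s); rewrite /cn hN pmul0 => /eqP; rewrite eq_sym oppr_eq0 oner_eq0.
  by [].
have hX1 : ('X - 1 != 0 :> {poly F})%R by rewrite -polyC1 polyXsubC_eq0.
have hQ : ('X^s * (('X - 1) * natpoly p n) != 0 :> {poly F})%R.
  rewrite !mulf_neq0 //. 
  all: try by apply/eqP.
  exact: (monic_neq0 (monicXn _ s)).
have [i [hi hne]] := KLB _ hQ.
move: hne; rewrite pmul_mul pmulXn pmul_mul pmulXsub1.
rewrite -/(cn n) (_ : Z.add (Z.add i (Z.of_nat s)) 1 = Z.of_nat (Z.to_nat (Z.add i (Z.of_nat s))).+1); last lia.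
rewrite (_ : Z.add i (Z.of_nat s) = Z.of_nat (Z.to_nat (Z.add i (Z.of_nat s)) - 1).+1); last lia.
rewrite !H1 ?subrr ?eqxx //; lia.
Qed.

Lemma digit_split k j m r : (j < p ^ m)%N ->
  (k * p ^ m + j) %/ p ^ r %% p = if (r < m)%N then j %/ p ^ r %% p else k %/ p ^ (r - m) %% p.
Proof.
move=> hj; have p0 := prime_gt0 hp.
case: ltnP => hr.
  have e : p ^ m = p ^ (m - r).-1 * p * p ^ r.
    by rewrite -expnSr prednK ?subn_gt0 // -expnD subnK // ltnW.
  rewrite e mulnA divnMDl ?expn_gt0 ?p0 // mulnA.
  by rewrite modnMDl.
have e : p ^ r = p ^ m * p ^ (r - m) by rewrite -expnD subnKC.
by rewrite e divnMA divnMDl ?expn_gt0 ?p0 // (divn_small hj) addn0.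
Qed.

Lemma natpoly_split k j m : (j < p ^ m)%N ->
  natpoly p (k * p ^ m + j) = (\poly_(r < m) ((j %/ p ^ r) %% p)%:R + natpoly p k * 'X^m)%R.
Proof.
move=> hj; apply/polyP => r.
rewrite coefD coef_poly coefMXn !(@coef_natpoly p hp) digit_split //.
by case: ltnP => _; rewrite ?addr0 ?add0r.
Qed.

Definition Mmat m s : 'M[F]_(m, s) := \matrix_(r < m, i < s) mu (Z.of_nat (s - i + r)).
Definition c0v k m s : 'rV[F]_s :=
  \row_(i < s) pmul (natpoly p k) (fun z => mu (Z.add z (Z.of_nat m))) (Z.of_nat (s - i)).
Definition wv n s : 'rV[F]_s := \row_(i < s) cn n (Z.of_nat (s - i)).

Lemma HW k m s j : (j < p ^ m)%N ->
  wv (k * p ^ m + j) s = (dig p m j *m Mmat m s + c0v k m s)%R.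
Proof.
move=> hj; apply/rowP => i; rewrite !mxE /cn natpoly_split // pmulD pmul_mul.
congr (_ + _)%R; last first.
  by apply: pmul_ext => w; rewrite pmulXn.
rewrite (pmul_widen _ _ _ m); last exact: size_poly.
rewrite zsum_ord; apply: eq_bigr => r _; rewrite !mxE.
rewrite /pc (_ : Z.leb 0 (Z.of_nat r) = true); last by apply/Z.leb_le; lia.
rewrite Nat2Z.id coef_poly ltn_ord; congr (_ * mu _)%R; lia.
Qed.

Lemma hh_sum n s : hh p (kdig n) s = \sum_(i < s) digit (cn n (Z.of_nat (s - i))) * p ^ i.
Proof.
elim: s => [|s IH]; first by rewrite big_ord0.
rewrite big_ord_recl subn0 expn0 muln1.
rewrite (_ : hh p (kdig n) s.+1 = p * hh p (kdig n) s + kdig n s)%N //.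
rewrite IH kdigE addnC big_distrr /=; congr (_ + _)%N.
by apply: eq_bigr => i _; rewrite expnS mulnCA; congr (_ * _)%N.
Qed.

Lemma Henc n s : hh p (kdig n) s = enc p s (wv n s).
Proof. by rewrite hh_sum /enc; apply: eq_bigr => i _; rewrite mxE. Qed.

Lemma HM m s : (0 < s)%N -> (s + (size B).-1 + K <= m + 1)%N ->
  forall d : 'rV[F]_s, (Mmat m s *m d^T = 0)%R -> d = 0%R.
Proof.
case: s => [//|s] _ hsm d hd; apply: NNPP => hd0.
have [i0 hi0] : exists i0, d ord0 i0 != 0%R.
  apply: NNPP => H; apply: hd0; apply/rowP => i; rewrite mxE.
  apply/eqP; apply: NNPP => hne; apply: H; exists i; exact/negP.
set D := (\poly_(u < s.+1) d ord0 (inord (s - u)))%R.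
have hD : D != 0%R.
  apply/eqP => h; move: hi0; have := congr1 (fun q : {poly F} => q`_(s - i0))%R h.
  rewrite /= coef_poly coef0 (_ : (s - i0 < s.+1)%N = true); last by apply/ltP; lia.
  rewrite (_ : s - (s - i0) = i0)%N ?inord_val => [->|]; rewrite ?eqxx //.
  by have := ltn_ord i0; lia.
have [i [hi hne]] := KLB _ hD.
have sD : (size D <= s.+1)%N by apply: size_poly.
have hr : (Z.to_nat i - 1 < m)%N.
  move: hi; move: (size D) sD => a ha; lia.
apply: (negP hne); apply/eqP.
rewrite (pmul_widen _ _ _ s.+1 sD) zsum_ord.
have e : (\sum_(j < s.+1) Mmat m s.+1 (Ordinal hr) j * d^T j ord0)%R = 0%R.
  by have := congr1 (fun M : 'M[F]_(m, 1) => M (Ordinal hr) ord0) hd; rewrite !mxE.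
rewrite -[X in _ = X]e.
rewrite [LHS](reindex_inj rev_ord_inj) /=; apply: eq_bigr => j _; rewrite !mxE mulrC.
rewrite /pc (_ : Z.leb 0 _ = true); last by apply/Z.leb_le; lia.
rewrite Nat2Z.id coef_poly (_ : (s.+1 - j.+1 < s.+1)%N = true); last by apply/ltP; lia.
rewrite (_ : s - (s.+1 - j.+1) = j)%N ?inord_val; last by have := ltn_ord j; lia.
congr (mu _ * _)%R; have := ltn_ord j; rewrite /=; lia.
Qed.

End Main.

Lemma eqbE (a b : nat) : Nat.eqb a b = (a == b).
Proof. by case: (Nat.eqb_spec a b) => [->|/eqP/negbTE ->]; rewrite ?eqxx. Qed.

Theorem proposition1 (p : nat) (hp : prime p) (L : laurent p)
  (A : nat -> {poly 'F_p}) (K : nat) (B : {poly 'F_p}) (x : nat -> R) :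
  irrational L ->
  is_cf_expansion L A ->
  (* K = K(L) = sup_{d >= 1} deg A_d, finite *)
  (forall d, (0 < d)%N -> ((size (A d)).-1 <= K)%N) ->
  (exists d, (0 < d)%N /\ (size (A d)).-1 = K) ->
  B != 0%R ->
  (* x is the digital Kronecker sequence associated with B L *)
  (forall n, kronecker_point (lmulL (polyL B) L) n (x n)) ->
  is_t_sequence p (K + (size B).-1 - 1) x.
Proof.
move=> _ [Ls [hL0 hall]] hK [d0 [hd0 hdK]] hB hx.
have hA n : A n = polypart (Ls n) := (hall n).1.
have hsize n : (0 < n)%N -> (1 < size (A n))%N := (hall n).2.1.
have hprod n : leqL (lmulL (lsubL (Ls n) (polyL (A n))) (Ls n.+1)) (lone p) := (hall n).2.2.
have hK1 : (1 <= K)%N by move: (hsize d0 hd0); rewrite -hdK; lia.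
have hp2 : (2 <= p)%coq_nat by apply/leP; exact: prime_gt1.
have hdig : forall n i, (kdig p L B n i < p)%coq_nat.
  by move=> n i; apply/ltP; exact: (digit_lt p hp).
split.
  move=> n.
  have [i0 [_ h2]] := nonmax p hp L Ls A K B hL0 hA hsize hprod hK hB n 0.
  exact: (real_bound0 p (kdig p L B n) (x n) i0 hp2 (hdig n) (ltP h2) (hx n)).
move=> m k htm; split; first lia.
move=> a ha.
set t := (K + (size B).-1 - 1)%N in htm ha *.
have hs : (0 < m - t)%N by lia.
have hsm : ((m - t) + (size B).-1 + K <= m + 1)%N by rewrite /t; lia.
set M := Mmat p L B m (m - t).
set c0 := c0v p L B k m (m - t).
have hpos : Rlt 0 (pow (INR p) (m - t)).
  apply: pow_lt; apply: (lt_INR 0); apply/ltP; exact: prime_gt0.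
rewrite (eq_bigr (fun j : 'I_(p ^ m) => if (digo p m j *m M + c0 == dig p (m - t) a)%R then 1 else 0)%N);
  last first.
  move=> j _.
  have [i0 [h1 h2]] := nonmax p hp L Ls A K B hL0 hA hsize hprod hK hB (k * p ^ m + j) (m - t).
  have hb := real_bound p (kdig p L B (k * p ^ m + j)) hp2 (hdig _) _ _ _ (leP h1) (ltP h2) (hx _).
  rewrite (_ : inRbox _ _ _ = Nat.eqb (hh p (kdig p L B (k * p ^ m + j)) (m - t)) a); last first.
    by rewrite -(inbox_iff _ _ _ a hpos hb) /inRbox; case: Rle_dec => //; case: Rlt_dec.
  rewrite eqbE (Henc p hp L B hB) (enc_eq p hp) // (HW p hp L B hB) //.
rewrite -(@reindex _ _ _ _ _ (digo p m) predT (fun v : 'rV['F_p]_m => if (v *m M + c0 == dig p (m - t) a)%R then 1 else 0)%N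
  (onW_bij _ (digo_bij p hp m))).
transitivity #|[set v : 'rV['F_p]_m | (v *m M + c0 == dig p (m - t) a)%R]|.
  by rewrite -sum1_card [RHS]big_mkcond /=; apply: eq_bigr => v _; rewrite inE.
have Hsurj := surj_of_inj p m (m - t) M (HM p hp L Ls A K B hL0 hA hsize hprod hK hB m (m - t) hs hsm).
have := fiber_card p hp m (m - t) M c0 Hsurj (dig p (m - t) a).
move=> hf; apply/eqP; rewrite -(@eqn_pmul2r (p ^ (m - t))) ?expn_gt0 ?prime_gt0 // hf -expnD.
by rewrite subnKC // ltnW.
Qed.
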